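(* For any time warp $f$, any $n\in\omega\setminus\{0\}$ and any $m\in\omega$: (i) $f^\star(n)=m$ iff $f(m)<n\le f(m+1)$; (ii) $f^\star(\omega)=m$ iff $f(m)<\omega=f(m+1)$; (iii) $f^\star(n)=\omega$ iff $f(\omega)<n$; (iv) $f^\star(\omega)=\omega$ iff $f(\omega)<\omega$ or $\mathrm{last}(f)=\omega$.
   Context: Let $\omega^+=\omega\cup\{\omega\}$. A time warp is a join-preserving map $f\colon\omega^+\to\omega^+$ (equivalently order-preserving with $f(0)=0$, $f(\omega)=\bigvee_{n\in\omega}f(n)$), with time warps ordered pointwise. $p(m)=\bigvee\{k\in\omega\mid k<m\}$ is the predecessor time warp, and $f^\star$ is the largest time warp $h$ with $f\circ h\le p$. For a time warp $f$, $\mathrm{last}(f)=\min\{m\in\omega^+\mid f(m)=f(\omega)\}$. *)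

(* Defs.v *)
From Stdlib Require Import Arith Lia.

Inductive omp : Type := Fin (n : nat) | Om.

Definition ole (x y : omp) : Prop :=
  match x, y with
  | Fin m, Fin n => m <= n
  | _, Om => True
  | Om, Fin _ => False
  end.

Definition olt (x y : omp) : Prop := ole x y /\ x <> y.

Definition is_join_seq (s : nat -> omp) (x : omp) : Prop :=
  (forall n, ole (s n) x) /\ (forall u, (forall n, ole (s n) u) -> ole x u).

Definition time_warp (f : omp -> omp) : Prop :=
  (forall x y, ole x y -> ole (f x) (f y)) /\
  f (Fin 0) = Fin 0 /\
  is_join_seq (fun n => f (Fin n)) (f Om).

Definition pred_tw (x : omp) : omp :=
  match x with
  | Fin 0 => Fin 0
  | Fin (S n) => Fin n
  | Om => Om
  end.

Definition is_star (f h : omp -> omp) : Prop :=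
  time_warp h /\
  (forall x, ole (f (h x)) (pred_tw x)) /\
  (forall g, time_warp g -> (forall x, ole (f (g x)) (pred_tw x)) ->
     forall x, ole (g x) (h x)).

Definition is_last (f : omp -> omp) (l : omp) : Prop :=
  f l = f Om /\ (forall m, f m = f Om -> ole l m).

Lemma pred_tw_join (x : omp) :
  (forall k, olt (Fin k) x -> ole (Fin k) (pred_tw x)) /\
  (forall u, (forall k, olt (Fin k) x -> ole (Fin k) u) -> ole (pred_tw x) u).
Proof.
  destruct x as [[|n]|]; simpl; split.
  - intros k [H1 H2]. simpl in H1. assert (k = 0) by lia. subst; simpl; lia.
  - intros u _; destruct u; simpl; auto; lia.
  - intros k [H1 H2]. simpl in *. assert (k <> S n) by congruence. lia.
  - intros u H. apply (H n). split; simpl; [lia|intro E; injection E; lia].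
  - intros k _; exact I.
  - intros u H. destruct u as [n|]; simpl; auto.
    specialize (H (S n)). simpl in H. assert (S n <= n); [apply H; split; [exact I|discriminate]|lia].
Qed.

(* Main.v *)
Require Import Defs.
From Stdlib Require Import Arith Lia Classical.

Lemma ole_trans x y z : ole x y -> ole y z -> ole x z.
Proof. destruct x, y, z; simpl; intuition lia. Qed.

Lemma ole_refl x : ole x x.
Proof. destruct x; simpl; auto. Qed.

Lemma ole_antisym x y : ole x y -> ole y x -> x = y.
Proof. destruct x, y; simpl; intuition; f_equal; lia. Qed.

Lemma pred_fin k : pred_tw (Fin k) = Fin (k - 1).
Proof. destruct k; simpl; f_equal; lia. Qed.

Lemma lowerA (f h : omp -> omp) : time_warp f -> is_star f h ->
  forall n y, 0 < n -> ole (f y) (Fin (n - 1)) -> ole y (h (Fin n)).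
Proof.
  intros [fm [f0 fj]] [hw [hp hmax]] n y Hn Hy.
  set (g := fun x => match x with Fin k => if k <? n then Fin 0 else y | Om => y end).
  assert (Hy0 : ole (Fin 0) y) by (destruct y; simpl; auto; lia).
  assert (Gtw : time_warp g).
  { split; [|split].
    - intros [a|] [b|]; simpl; intro H; try contradiction;
        try (destruct (Nat.ltb_spec a n)); try (destruct (Nat.ltb_spec b n));
        simpl; auto; try lia; try apply ole_refl; destruct y; simpl; auto.
    - simpl. destruct (Nat.ltb_spec 0 n); [reflexivity|lia].
    - split.
      + intro k; simpl. destruct (Nat.ltb_spec k n); auto using ole_refl.
      + intros u Hu. specialize (Hu n). simpl in Hu.
        destruct (Nat.ltb_spec n n); [lia|]. exact Hu. }
  assert (Gp : forall x, ole (f (g x)) (pred_tw x)).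
  { intros [k|]; [|simpl; destruct (f y); exact I].
    rewrite pred_fin. unfold g. destruct (Nat.ltb_spec k n).
    - rewrite f0; simpl; lia.
    - eapply ole_trans; [exact Hy|]; simpl; lia. }
  specialize (hmax g Gtw Gp (Fin n)). simpl in hmax.
  destruct (Nat.ltb_spec n n); [lia|]. exact hmax.
Qed.

Theorem proposition2p7 (f h : omp -> omp) :
  time_warp f -> is_star f h ->
  (forall n m : nat, 0 < n ->
     (h (Fin n) = Fin m <-> olt (f (Fin m)) (Fin n) /\ ole (Fin n) (f (Fin (S m))))) /\
  (forall m : nat,
     (h Om = Fin m <-> olt (f (Fin m)) Om /\ f (Fin (S m)) = Om)) /\
  (forall n : nat, 0 < n ->
     (h (Fin n) = Om <-> olt (f Om) (Fin n))) /\
  (h Om = Om <-> olt (f Om) Om \/ is_last f Om).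
Proof.
  intros Hf Hh.
  pose proof (lowerA f h Hf Hh) as A.
  destruct Hf as [fm [f0 [fj1 fj2]]].
  destruct Hh as [[hm [h0 [hj1 hj2]]] [hp _]].
  assert (LT : forall y n, 0 < n -> (olt y (Fin n) <-> ole y (Fin (n - 1)))).
  { intros [a|] n Hn; unfold olt; simpl; split; intuition;
      try (assert (a <> n) by congruence); try lia.
    all: match goal with H : Fin _ = Fin _ |- _ => injection H; lia end. }
  assert (HP : forall n, 0 < n -> ole (f (h (Fin n))) (Fin (n - 1))).
  { intros n Hn. rewrite <- pred_fin. apply hp. }
  assert (HPk : forall k, exists j, ole (f (h (Fin k))) (Fin j)).
  { intro k. exists (k - 1). rewrite <- pred_fin. apply hp. }
  assert (P2 : forall m : nat,
     (h Om = Fin m <-> olt (f (Fin m)) Om /\ f (Fin (S m)) = Om)).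
  { intro m; split.
    - intro E. split.
      + assert (Ex : exists k, h (Fin k) = Fin m).
        { apply NNPP; intro N.
          destruct m as [|m].
          - apply N; exists 0; exact h0.
          - assert (B : ole (h Om) (Fin m)).
            { apply hj2. intro k. pose proof (hj1 k) as H1. rewrite E in H1.
              destruct (h (Fin k)) as [a|] eqn:Ea; simpl in *; try contradiction.
              assert (a <> S m) by (intro; subst; apply N; exists k; exact Ea). lia. }
            rewrite E in B; simpl in B; lia. }
        destruct Ex as [k Ek]. destruct (HPk k) as [j Hj]. rewrite Ek in Hj.
        unfold olt. destruct (f (Fin m)); simpl in *; [split; [auto|discriminate]|contradiction].
      + destruct (f (Fin (S m))) as [j|] eqn:Ej; [|reflexivity].
        exfalso. assert (H1 : ole (Fin (S m)) (h (Fin (S j)))).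
        { apply A; [lia|]. rewrite Ej; simpl; lia. }
        pose proof (hj1 (S j)) as H2. rewrite E in H2.
        pose proof (ole_trans _ _ _ H1 H2). simpl in *; lia.
    - intros [[H1 H1'] H2]. destruct (f (Fin m)) as [j|] eqn:Ej.
      + apply ole_antisym.
        * apply hj2. intro k. destruct k as [|k]; [rewrite h0; simpl; lia|].
          destruct (h (Fin (S k))) as [a|] eqn:Ea.
          -- simpl. destruct (le_lt_dec a m); auto. exfalso.
             pose proof (HP (S k) ltac:(lia)) as H3. rewrite Ea in H3.
             assert (H4 : ole (f (Fin (S m))) (f (Fin a))) by (apply fm; simpl; lia).
             rewrite H2 in H4. pose proof (ole_trans _ _ _ H4 H3). simpl in *; auto.
          -- exfalso. pose proof (HP (S k) ltac:(lia)) as H3. rewrite Ea in H3.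
             assert (H4 : ole (f (Fin (S m))) (f Om)) by (apply fm; simpl; auto).
             rewrite H2 in H4. pose proof (ole_trans _ _ _ H4 H3). simpl in *; auto.
        * apply (ole_trans _ (h (Fin (S j)))).
          -- apply A; [lia|]. rewrite Ej; simpl; lia.
          -- apply hj1.
      + exfalso; apply H1'; reflexivity. }
  split; [|split; [exact P2|split]].
  -
    intros n m Hn. rewrite LT by exact Hn. split.
    + intro E. split.
      * rewrite <- E. apply HP; exact Hn.
      * destruct (f (Fin (S m))) as [j|] eqn:Ej; simpl; auto.
        destruct (le_lt_dec n j); auto. exfalso.
        assert (H1 : ole (Fin (S m)) (h (Fin n))) by (apply A; auto; rewrite Ej; simpl; lia).
        rewrite E in H1; simpl in H1; lia.
    + intros [H1 H2]. pose proof (A n (Fin m) Hn H1) as H3.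
      destruct (h (Fin n)) as [k|] eqn:Ek.
      * simpl in H3. destruct (Nat.eq_dec k m); [subst; reflexivity|exfalso].
        assert (H4 : ole (f (Fin (S m))) (f (Fin k))) by (apply fm; simpl; lia).
        pose proof (HP n Hn) as H5. rewrite Ek in H5.
        pose proof (ole_trans _ _ _ H2 (ole_trans _ _ _ H4 H5)). simpl in *; lia.
      * exfalso.
        assert (H4 : ole (f (Fin (S m))) (f Om)) by (apply fm; simpl; auto).
        pose proof (HP n Hn) as H5. rewrite Ek in H5.
        pose proof (ole_trans _ _ _ H2 (ole_trans _ _ _ H4 H5)). simpl in *; lia.
  -
    intros n Hn. rewrite LT by exact Hn. split.
    + intro E. rewrite <- E. apply HP; exact Hn.
    + intro H1. pose proof (A n Om Hn H1) as H2.
      destruct (h (Fin n)); simpl in H2; [contradiction|reflexivity].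
  -
    split.
    + intro E. destruct (f Om) as [j|] eqn:Ej.
      * left. split; simpl; auto; discriminate.
      * right. split; [reflexivity|]. intros [m|] Hm; simpl; auto.
        assert (B : ole (h Om) (Fin m)).
        { apply hj2. intro k. destruct (HPk k) as [j Hj].
          destruct (h (Fin k)) as [a|] eqn:Ea.
          - simpl. destruct (le_lt_dec a m); auto. exfalso.
            assert (H4 : ole (f (Fin m)) (f (Fin a))) by (apply fm; simpl; lia).
            rewrite Hm, Ej in H4. pose proof (ole_trans _ _ _ H4 Hj). simpl in *; auto.
          - exfalso. rewrite Ej in Hj. simpl in Hj; auto. }
        rewrite E in B; simpl in B; contradiction.
    + intros [H1|H1].
      * destruct (f Om) as [j|] eqn:Ej; [|destruct H1; contradiction].
        assert (H2 : ole Om (h (Fin (S j)))) by (apply A; [lia|]; rewrite Ej; simpl; lia).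
        pose proof (ole_trans _ _ _ H2 (hj1 (S j))).
        destruct (h Om); simpl in *; [contradiction|reflexivity].
      * destruct (h Om) as [m|] eqn:Em; [|reflexivity]. exfalso.
        destruct (proj1 (P2 m) eq_refl) as [_ H2].
        destruct H1 as [H1 H3]. specialize (H3 (Fin (S m))).
        assert (H5 : ole (f (Fin (S m))) (f Om)) by (apply fm; simpl; auto).
        rewrite H2 in H3, H5. simpl in H3. destruct (f Om); simpl in H5; [contradiction|].
        apply H3; reflexivity.
Qed.
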